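(* Let $\mathcal R$ and $\mathcal S$ be TRSs which are equivalent modulo $\mathcal B$ (i.e. $\leftrightarrow^*_{\mathcal R\cup\mathcal B}=\leftrightarrow^*_{\mathcal S\cup\mathcal B}$) and canonical modulo $\mathcal B$. If there is a $\mathcal B$-compatible reduction order $>$ with $\ell>r$ for all rules $\ell\to r\in\mathcal R\cup\mathcal S$, then every rule of $\mathcal R$ has a right-$\mathcal B$-equivalent variant in $\mathcal S$ and vice versa.
   Context: Terms over a signature $\mathcal F$; $\to_{\mathcal R}$ is the usual rewrite relation, $\leftarrow$ its inverse. $\mathcal B$ is a fixed ES with $\mathrm{Var}(\ell)=\mathrm{Var}(r)$ for all $\ell\approx r\in\mathcal B$, $\sim_{\mathcal B}=\leftrightarrow^*_{\mathcal B}$, $\to_{\mathcal R/\mathcal B}=\sim_{\mathcal B}\cdot\to_{\mathcal R}\cdot\sim_{\mathcal B}$. Terminating modulo $\mathcal B$: no infinite $\to_{\mathcal R/\mathcal B}$-sequence; Church–Rosser modulo $\mathcal B$: $\leftrightarrow^*_{\mathcal R\cup\mathcal B}\subseteq\to^*_{\mathcal R}\cdot\sim_{\mathcal B}\cdot\leftarrow^*_{\mathcal R}$; complete modulo $\mathcal B$: both. A TRS is left-reduced if for every rule $\ell\to r$, $\ell$ is a normal form of the TRS without that rule; right-$\mathcal B$-reduced if for every rule $\ell\to r$, $r$ is a normal form of $\to_{\mathcal R/\mathcal B}$; canonical modulo $\mathcal B$ if complete modulo $\mathcal B$, left-reduced and right-$\mathcal B$-reduced. A $\mathcal B$-compatible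 reduction order is a well-founded order on terms closed under contexts and substitutions with $\sim_{\mathcal B}\cdot>\cdot\sim_{\mathcal B}\subseteq>$. Two rules $\ell\to r,\ell'\to r'$ are right-$\mathcal B$-equivalent variants if there is a renaming $\sigma$ with $\ell\sigma=\ell'$ and $r\sigma\sim_{\mathcal B}r'$. *)

(* Defs.v *)
(* First-order terms over a signature F (function symbols of
   type F, unranked as in IsaFoR) with the countably infinite variable set nat. *)
From Stdlib Require Import List Relations.
Import ListNotations.

Set Implicit Arguments.

Section Terms.
Variable F : Type.

Inductive term : Type :=
| Var : nat -> term
| Fun : F -> list term -> term.

Fixpoint subst (sigma : nat -> term) (t : term) : term :=
  match t with
  | Var x => sigma x
  | Fun f ts => Fun f (map (subst sigma) ts)
  end.

Fixpoint vars (t : term) : list nat :=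
  match t with
  | Var x => [x]
  | Fun _ ts => flat_map vars ts
  end.

Inductive ctx : Type :=
| Hole : ctx
| CFun : F -> list term -> ctx -> list term -> ctx.

Fixpoint fill (C : ctx) (t : term) : term :=
  match C with
  | Hole => t
  | CFun f before C' after => Fun f (before ++ fill C' t :: after)
  end.

Definition rules := term -> term -> Prop.

Definition is_trs (R : rules) : Prop :=
  forall l r, R l r -> (forall x, l <> Var x) /\ incl (vars r) (vars l).

Definition var_preserving (B : rules) : Prop :=
  forall l r, B l r -> forall x, In x (vars l) <-> In x (vars r).

Definition rules_union (R S : rules) : rules := fun l r => R l r \/ S l r.

Definition rstep (R : rules) (s t : term) : Prop :=
  exists C l r sigma, R l r /\ s = fill C (subst sigma l) /\ t = fill C (subst sigma r).

Definition rconv (R : rules) : relation term := clos_refl_sym_trans term (rstep R).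

Definition simB (B : rules) : relation term := rconv B.

Definition rstep_mod (R B : rules) (s t : term) : Prop :=
  exists s' t', simB B s s' /\ rstep R s' t' /\ simB B t' t.

Definition normal_form (rel : relation term) (t : term) : Prop :=
  ~ exists u, rel t u.

Definition terminating_mod (R B : rules) : Prop :=
  ~ exists f : nat -> term, forall n, rstep_mod R B (f n) (f (S n)).

Definition church_rosser_mod (R B : rules) : Prop :=
  forall s t, rconv (rules_union R B) s t ->
    exists u v, clos_refl_trans term (rstep R) s u /\ simB B u v /\
                clos_refl_trans term (rstep R) t v.

Definition complete_mod (R B : rules) : Prop :=
  terminating_mod R B /\ church_rosser_mod R B.

Definition remove_rule (R : rules) (l r : term) : rules :=
  fun l' r' => R l' r' /\ (l', r') <> (l, r).

Definition left_reduced (R : rules) : Prop :=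
  forall l r, R l r -> normal_form (rstep (remove_rule R l r)) l.

Definition right_B_reduced (R B : rules) : Prop :=
  forall l r, R l r -> normal_form (rstep_mod R B) r.

Definition canonical_mod (R B : rules) : Prop :=
  complete_mod R B /\ left_reduced R /\ right_B_reduced R B.

Definition B_compatible_reduction_order (B : rules) (gt : relation term) : Prop :=
  (forall t, ~ gt t t) /\
  (forall s t u, gt s t -> gt t u -> gt s u) /\
  well_founded (fun x y => gt y x) /\
  (forall C s t, gt s t -> gt (fill C s) (fill C t)) /\
  (forall sigma s t, gt s t -> gt (subst sigma s) (subst sigma t)) /\
  (forall s s' t' t, simB B s s' -> gt s' t' -> simB B t' t -> gt s t).

Definition renaming (sigma : nat -> term) : Prop :=
  exists pi pi' : nat -> nat,
    (forall x, pi' (pi x) = x) /\ (forall x, pi (pi' x) = x) /\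
    (forall x, sigma x = Var (pi x)).

Definition right_B_equiv_variants (B : rules) (l r l' r' : term) : Prop :=
  exists sigma, renaming sigma /\ subst sigma l = l' /\ simB B (subst sigma r) r'.

End Terms.

Arguments rules_union {F} R S.
Arguments rconv {F} R.
Arguments simB {F} B.
Arguments rstep {F} R.
Arguments rstep_mod {F} R B.

(* Main.v *)
Require Import Defs.
From Stdlib Require Import List Relations Lia Classical Arith.
Import ListNotations.

Definition swap (a b z : nat) : nat := if Nat.eqb z a then b else if Nat.eqb z b then a else z.

Lemma swap_inv a b z : swap a b (swap a b z) = z.
Proof.
  unfold swap.
  destruct (Nat.eqb_spec z a); destruct (Nat.eqb_spec z b); subst;
  repeat (match goal with |- context [Nat.eqb ?x ?y] => destruct (Nat.eqb_spec x y) end); lia.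
Qed.

Lemma extend_perm (D : list nat) (f : nat -> nat) :
  (forall x y, In x D -> In y D -> f x = f y -> x = y) ->
  exists p p' : nat -> nat, (forall x, p' (p x) = x) /\ (forall x, p (p' x) = x) /\
    (forall x, In x D -> p x = f x).
Proof.
  induction D as [|a D IH]; intros Hinj.
  - exists (fun x => x), (fun x => x). simpl; tauto.
  - destruct IH as (p & p' & H1 & H2 & H3).
    { intros; apply Hinj; simpl; auto. }
    destruct (in_dec Nat.eq_dec a D) as [Ha|Ha].
    + exists p, p'. repeat split; auto. intros x [<-|Hx]; auto.
    + exists (fun z => swap (p a) (f a) (p z)), (fun z => p' (swap (p a) (f a) z)).
      repeat split.
      * intros x. cbv beta. rewrite swap_inv. auto.
      * intros x. cbv beta. rewrite H2. apply swap_inv.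
      * intros x [<-|Hx].
        -- unfold swap. rewrite Nat.eqb_refl. auto.
        -- rewrite (H3 x Hx). unfold swap.
           destruct (Nat.eqb_spec (f x) (p a)) as [E|E].
           ++ exfalso. rewrite <- H3 in E by auto.
              assert (x = a) by (rewrite <- (H1 x), <- (H1 a); congruence). subst; auto.
           ++ destruct (Nat.eqb_spec (f x) (f a)) as [E'|E']; auto.
              exfalso. assert (x = a) by (apply Hinj; simpl; auto). subst; auto.
Qed.

Section Aux.
Variable F : Type.
Notation term := (term F).
Notation V := (Var F).

Fixpoint term_ind' (P : term -> Prop) (Hv : forall x, P (V x))
  (Hf : forall f ts, Forall P ts -> P (Fun f ts)) (t : term) : P t :=
  match t with
  | Var _ x => Hv x
  | Fun f ts => Hf f ts ((fix go ts := match ts return Forall P ts with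
                  | [] => Forall_nil _
                  | t :: ts' => Forall_cons _ (term_ind' P Hv Hf t) (go ts') end) ts)
  end.

Fixpoint size (t : term) : nat :=
  match t with Var _ _ => 1 | Fun f ts => S (list_sum (map size ts)) end.

Lemma size_pos (t : term) : 1 <= size t.
Proof. destruct t; simpl; lia. Qed.

Lemma size_fill (C : ctx F) (t : term) : size t <= size (fill C t) /\ (C <> Hole F -> size t < size (fill C t)).
Proof.
  induction C as [|f b C IH a]; simpl.
  - split; [lia| congruence].
  - rewrite map_app, list_sum_app. simpl. destruct IH. split; intros; lia.
Qed.

Lemma size_subst (sigma : nat -> term) t : size t <= size (subst sigma t).
Proof.
  induction t using term_ind'; simpl.
  - apply size_pos.
  - apply le_n_S. induction H; simpl; lia.
Qed.

Lemma subst_comp (sigma tau : nat -> term) t :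
  subst tau (subst sigma t) = subst (fun x => subst tau (sigma x)) t.
Proof.
  induction t using term_ind'; simpl; auto.
  f_equal. rewrite map_map. apply map_ext_in. intros a Ha.
  rewrite Forall_forall in H. auto.
Qed.

Lemma subst_ext (t : term) : forall rho rho' : nat -> term, (forall x, In x (vars t) -> rho x = rho' x) ->
  subst rho t = subst rho' t.
Proof.
  induction t using term_ind'; simpl; intros rho rho' Hx.
  - auto.
  - f_equal. apply map_ext_in. intros a Ha. rewrite Forall_forall in H.
    apply H; auto. intros x Hin. apply Hx. apply in_flat_map. eauto.
Qed.

Lemma map_id_in (g : term -> term) l : map g l = l -> forall a, In a l -> g a = a.
Proof.
  induction l; simpl; intros E b Hb; [contradiction|].
  injection E; intros. destruct Hb; subst; auto.
Qed.

Lemma subst_id_on (t : term) : forall rho : nat -> term, subst rho t = t -> forall x, In x (vars t) -> rho x = V x.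
Proof.
  induction t using term_ind'; simpl; intros rho E y Hy.
  - destruct Hy as [<-|[]]; auto.
  - injection E; intro E'. apply in_flat_map in Hy as [u [Hu Hy]].
    rewrite Forall_forall in H. eapply H; eauto. eapply map_id_in; eauto.
Qed.

Lemma subst_var (t : term) : subst V t = t.
Proof.
  induction t using term_ind'; simpl; auto. f_equal.
  rewrite Forall_forall in H. rewrite <- map_id. apply map_ext_in. auto.
Qed.

Fixpoint csubst (sigma : nat -> term) (C : ctx F) : ctx F :=
  match C with
  | Hole _ => Hole F
  | CFun f b C' a => CFun f (map (subst sigma) b) (csubst sigma C') (map (subst sigma) a)
  end.

Lemma subst_fill (sigma : nat -> term) C t : subst sigma (fill C t) = fill (csubst sigma C) (subst sigma t).
Proof. induction C; simpl; auto. rewrite map_app. simpl. rewrite IHC. auto. Qed.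

Fixpoint ccomp (C1 C2 : ctx F) : ctx F :=
  match C1 with
  | Hole _ => C2
  | CFun f b C a => CFun f b (ccomp C C2) a
  end.

Lemma fill_ccomp C1 C2 (t : term) : fill (ccomp C1 C2) t = fill C1 (fill C2 t).
Proof. induction C1; simpl; auto. rewrite IHC1; auto. Qed.

Lemma rstep_subst (R : rules F) (sigma : nat -> term) s t : rstep R s t -> rstep R (subst sigma s) (subst sigma t).
Proof.
  intros (C & l & r & rho & HR & -> & ->).
  exists (csubst sigma C), l, r, (fun x => subst sigma (rho x)).
  rewrite !subst_fill, !subst_comp. auto.
Qed.

Lemma rstep_fill (R : rules F) D s t : rstep R s t -> rstep R (fill D s) (fill D t).
Proof.
  intros (C & l & r & rho & HR & -> & ->).
  exists (ccomp D C), l, r, rho. rewrite !fill_ccomp. auto.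
Qed.

Lemma rstep_mono (R R' : rules F) s t : (forall l r, R l r -> R' l r) -> rstep R s t -> rstep R' s t.
Proof. intros H (C & l & r & rho & HR & -> & ->). exists C, l, r, rho. auto. Qed.

Lemma crst_map (A : Type) (rel rel' : relation A) (h : A -> A) :
  (forall s t, rel s t -> rel' (h s) (h t)) ->
  forall s t, clos_refl_sym_trans A rel s t -> clos_refl_sym_trans A rel' (h s) (h t).
Proof.
  intros H s t Hst. induction Hst.
  - apply rst_step; auto.
  - apply rst_refl.
  - apply rst_sym; auto.
  - eapply rst_trans; eauto.
Qed.

Lemma crt_map (A : Type) (rel rel' : relation A) (h : A -> A) :
  (forall s t, rel s t -> rel' (h s) (h t)) ->
  forall s t, clos_refl_trans A rel s t -> clos_refl_trans A rel' (h s) (h t).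
Proof.
  intros H s t Hst. induction Hst.
  - apply rt_step; auto.
  - apply rt_refl.
  - eapply rt_trans; eauto.
Qed.

Lemma simB_subst (B : rules F) (sigma : nat -> term) s t : simB B s t -> simB B (subst sigma s) (subst sigma t).
Proof.
  apply (@crst_map _ (rstep B) (rstep B) (subst sigma)). intros; apply rstep_subst; auto.
Qed.

Lemma rt_nf (R : rules F) t u : (forall w, ~ rstep R t w) ->
  clos_refl_trans term (rstep R) t u -> u = t.
Proof.
  intros Hnf H. apply clos_rt_rt1n in H. destruct H; auto. exfalso; eapply Hnf; eauto.
Qed.

Section Order.
Variable B : rules F.
Variable gt : relation term.
Hypothesis Hord : B_compatible_reduction_order B gt.

Lemma gt_rstep (R : rules F) s t : (forall l r, R l r -> gt l r) -> rstep R s t -> gt s t.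
Proof.
  destruct Hord as (_ & _ & _ & Hc & Hs & _).
  intros H (C & l & r & rho & HR & -> & ->). auto.
Qed.

Lemma gt_rt (R : rules F) s t : (forall l r, R l r -> gt l r) ->
  clos_refl_trans term (rstep R) s t -> s = t \/ gt s t.
Proof.
  destruct Hord as (_ & Htr & _).
  intros H Hst. induction Hst.
  - right. eapply gt_rstep; eauto.
  - auto.
  - destruct IHHst1 as [->|]; destruct IHHst2 as [->|]; eauto.
Qed.

Lemma contra s t v (R : rules F) : (forall l r, R l r -> gt l r) ->
  gt s t -> simB B s v -> clos_refl_trans term (rstep R) t v -> False.
Proof.
  intros HR Hst Hsv Htv. pose proof Hord as (Hirr & Htr & _ & _ & _ & Hcomp).
  destruct (gt_rt _ _ _ HR Htv) as [<-|Hg].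
  - apply (Hirr s). eapply Hcomp; [apply rst_refl| exact Hst| apply rst_sym; exact Hsv].
  - apply (Hirr s). eapply Hcomp; [apply rst_refl| eapply Htr; eauto| apply rst_sym; exact Hsv].
Qed.

Lemma nf_transfer (R S : rules F) :
  (forall s t, rconv (rules_union S B) s t -> rconv (rules_union R B) s t) ->
  church_rosser_mod R B -> (forall l r, R l r -> gt l r) -> (forall l r, S l r -> gt l r) ->
  forall t, (forall w, ~ rstep R t w) -> forall w, ~ rstep S t w.
Proof.
  intros Heq HCR HR HS t Hnf w Hw.
  assert (rconv (rules_union R B) t w).
  { apply Heq. apply rst_step. eapply rstep_mono; [|exact Hw]. intros; left; auto. }
  destruct (HCR _ _ H) as (u & v & Htu & Huv & Hwv).
  apply rt_nf in Htu; auto. subst u.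
  eapply (contra t w v R); eauto. eapply gt_rstep; eauto.
Qed.

Lemma reducible (R S : rules F) :
  (forall s t, rconv (rules_union R B) s t -> rconv (rules_union S B) s t) ->
  church_rosser_mod S B -> (forall l r, S l r -> gt l r) ->
  forall l r, R l r -> gt l r -> exists w, rstep S l w.
Proof.
  intros Heq HCR HS l r HRl Hg. apply NNPP. intro Hn.
  assert (Hnf : forall w, ~ rstep S l w) by (intros w Hw; apply Hn; eauto).
  assert (rconv (rules_union S B) l r).
  { apply Heq. apply rst_step. exists (Hole F), l, r, (V).
    split; [left; auto|]. simpl. rewrite !subst_var. auto. }
  destruct (HCR _ _ H) as (u & v & Hlu & Huv & Hrv).
  apply rt_nf in Hlu; auto. subst u.
  exact (contra l r v S HS Hg Huv Hrv).
Qed.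

Lemma half (R S : rules F) :
  (forall s t, rconv (rules_union R B) s t -> rconv (rules_union S B) s t) ->
  (forall s t, rconv (rules_union S B) s t -> rconv (rules_union R B) s t) ->
  canonical_mod R B -> canonical_mod S B -> is_trs R -> is_trs S ->
  (forall l r, R l r -> gt l r) -> (forall l r, S l r -> gt l r) ->
  forall l r, R l r -> exists l' r', S l' r' /\ right_B_equiv_variants B l r l' r'.
Proof.
  intros HeqRS HeqSR [[_ CRR] [LR RRR]] [[_ CRS] [LRS RRS]] TR TS HR HS l r HRl.
  destruct (reducible R S HeqRS CRS HS l r HRl (HR l r HRl))
    as [w (C & l' & r' & s' & HSl' & El & Ew)].
  destruct (reducible S R HeqSR CRR HR l' r' HSl' (HS _ _ HSl'))
    as [w' (D & l'' & r'' & t0 & HRl'' & El' & Ew')].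
  assert (Hpair : (l'', r'') = (l, r)).
  { apply NNPP; intro Hne. apply (LR l r HRl).
    exists (fill (ccomp C (csubst s' D)) (subst (fun x => subst s' (t0 x)) r'')).
    exists (ccomp C (csubst s' D)), l'', r'', (fun x => subst s' (t0 x)).
    split; [split; auto|]. split; auto.
    rewrite El, El', subst_fill, fill_ccomp, subst_comp. reflexivity. }
  injection Hpair as -> ->.
  pose proof (size_fill C (subst s' l')) as [HC1 HC2].
  pose proof (size_fill D (subst t0 l)) as [HD1 HD2].
  pose proof (size_subst s' l'). pose proof (size_subst t0 l).
  rewrite <- El in HC1, HC2. rewrite <- El' in HD1, HD2.
  assert (C = Hole F) by (destruct C; [reflexivity| exfalso; specialize (HC2 ltac:(discriminate)); lia]).
  assert (D = Hole F) by (destruct D; [reflexivity| exfalso; specialize (HD2 ltac:(discriminate)); lia]).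
  subst C D. simpl in El, El', Ew.
  assert (Hid1 : forall x, In x (vars l) -> subst s' (t0 x) = Var F x).
  { apply subst_id_on. rewrite <- subst_comp, <- El', <- El. reflexivity. }
  assert (Hid2 : forall x, In x (vars l') -> subst t0 (s' x) = Var F x).
  { apply subst_id_on. rewrite <- subst_comp, <- El, <- El'. reflexivity. }
  assert (HnfR : forall w, ~ rstep R r w).
  { intros u Hu. apply (RRR l r HRl). exists u, r, u. split; [apply rst_refl|]. split; auto. apply rst_refl. }
  assert (HnfS := nf_transfer R S HeqSR CRR HR HS r HnfR).
  assert (HnfS' : forall w, ~ rstep S r' w).
  { intros u Hu. apply (RRS l' r' HSl'). exists u, r', u. split; [apply rst_refl|]. split; auto. apply rst_refl. }
  assert (Hback : subst t0 (subst s' r') = r').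
  { rewrite subst_comp. rewrite <- (subst_var r') at 2. apply subst_ext.
    intros x Hx. apply Hid2. apply (proj2 (TS _ _ HSl')). auto. }
  assert (HnfS2 : forall w, ~ rstep S (subst s' r') w).
  { intros u Hu. apply (HnfS' (subst t0 u)). rewrite <- Hback. apply rstep_subst; auto. }
  assert (Hconv : rconv (rules_union S B) r (subst s' r')).
  { apply HeqRS. eapply rst_trans.
    - apply rst_sym. apply rst_step. exists (Hole F), l, r, (Var F). split; [left; auto|].
      simpl. rewrite !subst_var. auto.
    - apply HeqSR. apply rst_step. exists (Hole F), l', r', s'. split; [left; auto|].
      simpl. auto. }
  destruct (CRS _ _ Hconv) as (u & v & Hru & Huv & Hv).
  apply rt_nf in Hru; auto. apply rt_nf in Hv; auto. subst u v.
  set (f := fun x => match t0 x with Var _ y => y | _ => x end).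
  assert (Hf : forall x, In x (vars l) -> t0 x = Var F (f x)).
  { intros x Hx. specialize (Hid1 x Hx). unfold f. destruct (t0 x); simpl in Hid1; [reflexivity|discriminate]. }
  destruct (extend_perm (vars l) f) as (p & p' & Hp1 & Hp2 & Hp3).
  { intros x y Hx Hy Exy. pose proof (Hid1 x Hx) as Ex. pose proof (Hid1 y Hy) as Ey.
    rewrite Hf in Ex, Ey by auto. simpl in Ex, Ey. rewrite Exy in Ex. congruence. }
  exists l', r'. split; auto. exists (fun x => Var F (p x)). split.
  { exists p, p'. auto. }
  split.
  - rewrite El'. apply subst_ext. intros x Hx. rewrite Hp3, Hf; auto.
  - rewrite (subst_ext r (fun x => Var F (p x)) t0).
    + rewrite <- Hback. apply simB_subst. auto.
    + intros x Hx. apply (proj2 (TR _ _ HRl)) in Hx. rewrite Hp3, Hf; auto.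
Qed.
End Order.
End Aux.

Theorem theorem6p18 (F : Type) (B R S : rules F) (gt : relation (term F)) :
  var_preserving B ->
  is_trs R -> is_trs S ->
  (forall s t, rconv (rules_union R B) s t <-> rconv (rules_union S B) s t) ->
  canonical_mod R B -> canonical_mod S B ->
  B_compatible_reduction_order B gt ->
  (forall l r, rules_union R S l r -> gt l r) ->
  (forall l r, R l r -> exists l' r', S l' r' /\ right_B_equiv_variants B l r l' r') /\
  (forall l r, S l r -> exists l' r', R l' r' /\ right_B_equiv_variants B l r l' r').
Proof.
  intros _ TR TS Heq CR CS Hord Hgt. split.
  - apply (half F B gt Hord R S); auto.
    + intros s t; apply Heq.
    + intros s t; apply Heq.
    + intros l r H; apply Hgt; left; auto.
    + intros l r H; apply Hgt; right; auto.
  - apply (half F B gt Hord S R); auto.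
    + intros s t; apply Heq.
    + intros s t; apply Heq.
    + intros l r H; apply Hgt; right; auto.
    + intros l r H; apply Hgt; left; auto.
Qed.
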